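(* Every vertex cover TAR graph is unique: for all graphs $G$ and $G'$, if $\mathfrak{C}(G)\cong\mathfrak{C}(G')$ then $G\cong G'$.
   Context: All graphs are finite, simple, undirected, with nonempty vertex set (isolated vertices allowed). A vertex cover of $G$ is a set $S\subseteq V(G)$ containing at least one endpoint of every edge. The vertex cover TAR graph $\mathfrak{C}(G)$ has as vertices the vertex covers of $G$, with $S_1S_2$ an edge iff $|S_1\ominus S_2|=1$ (symmetric difference). *)

(* Defs.v *)
From mathcomp Require Import all_boot.
Set Implicit Arguments. Unset Strict Implicit. Unset Printing Implicit Defensive.

Definition simple_graph (T : finType) (e : rel T) : Prop :=
  symmetric e /\ irreflexive e.

Definition graph_iso (A B : Type) (rA : rel A) (rB : rel B) : Prop :=
  exists f : A -> B, bijective f /\ forall x y, rA x y = rB (f x) (f y).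

Definition is_vertex_cover (T : finType) (e : rel T) (S : {set T}) : bool :=
  [forall x, forall y, e x y ==> (x \in S) || (y \in S)].

Definition vcover (T : finType) (e : rel T) :=
  {S : {set T} | is_vertex_cover e S}.

Definition symdiff (T : finType) (A B : {set T}) : {set T} :=
  (A :\: B) :|: (B :\: A).

Definition tar_adj {T : finType} (e : rel T) : rel (vcover e) :=
  fun S1 S2 => #|symdiff (val S1) (val S2)| == 1.

(* Main.v *)
Require Import Defs.
From mathcomp Require Import all_boot.
Set Implicit Arguments. Unset Strict Implicit. Unset Printing Implicit Defensive.

Lemma in_symdiff (T : finType) (A B : {set T}) y :
  (y \in symdiff A B) = ((y \in A) != (y \in B)).
Proof. rewrite !inE; by case: (y \in A); case: (y \in B). Qed.

Lemma symdiffK (T : finType) (A C : {set T}) : symdiff A (symdiff A C) = C.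
Proof. apply/setP => y; rewrite !in_symdiff; by case: (y \in A); case: (y \in C). Qed.

Lemma coverP (T : finType) (e : rel T) (S : {set T}) :
  reflect (forall x y, e x y -> (x \in S) || (y \in S)) (is_vertex_cover e S).
Proof.
apply: (iffP forallP) => [H x y exy | H x].
  by move: (H x) => /forallP/(_ y)/implyP; apply.
by apply/forallP => y; apply/implyP; apply: H.
Qed.

Definition nb (T : finType) (e : rel T) (S : vcover e) (u : T) : vcover e :=
  insubd S (symdiff (val S) [set u]).
Definition PP (T : finType) (e : rel T) (S : vcover e) :=
  forall u, is_vertex_cover e (symdiff (val S) [set u]).
Definition deg (T : finType) (e : rel T) (S : vcover e) :=
  #|[set w | tar_adj S w]|.
Definition elt (T : finType) (e : rel T) (x0 : T) (S w : vcover e) :=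
  odflt x0 [pick t in symdiff (val S) (val w)].

Lemma val_nb (T : finType) (e : rel T) (S : vcover e) u :
  is_vertex_cover e (symdiff (val S) [set u]) -> val (nb S u) = symdiff (val S) [set u].
Proof. by move=> h; rewrite /nb insubdK. Qed.

Lemma adj_nb (T : finType) (e : rel T) (S : vcover e) u :
  is_vertex_cover e (symdiff (val S) [set u]) -> tar_adj S (nb S u).
Proof. by move=> h; rewrite /tar_adj val_nb // symdiffK cards1. Qed.

Lemma nb_inj (T : finType) (e : rel T) (S : vcover e) u v :
  is_vertex_cover e (symdiff (val S) [set u]) ->
  is_vertex_cover e (symdiff (val S) [set v]) -> nb S u = nb S v -> u = v.
Proof.
move=> hu hv /(congr1 val); rewrite !val_nb // => /(congr1 (symdiff (val S))).
by rewrite !symdiffK; apply: set1_inj.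
Qed.

Lemma adj_ex (T : finType) (e : rel T) (S w : vcover e) :
  tar_adj S w -> exists t, [/\ symdiff (val S) (val w) = [set t],
     is_vertex_cover e (symdiff (val S) [set t]) & w = nb S t].
Proof.
move=> /cards1P [t ht]; exists t.
have hw : val w = symdiff (val S) [set t] by rewrite -ht symdiffK.
have hc : is_vertex_cover e (symdiff (val S) [set t]) by rewrite -hw; exact: valP.
split=> //; apply: val_inj; by rewrite val_nb.
Qed.

Lemma adj_elt (T : finType) (e : rel T) (x0 : T) (S w : vcover e) :
  tar_adj S w -> w = nb S (elt x0 S w).
Proof.
case/adj_ex => t [ht hc ->].
suff -> : elt x0 S (nb S t) = t by [].
rewrite /elt val_nb // symdiffK; case: pickP => [z|/(_ t)]; rewrite inE ?eqxx //.
by move/eqP.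
Qed.

Lemma deg_eq (T : finType) (e : rel T) (S : vcover e) :
  deg S = #|[set u | is_vertex_cover e (symdiff (val S) [set u])]|.
Proof.
rewrite /deg; set D := [set u : T | _].
have -> : [set w | tar_adj S w] = nb S @: D.
  apply/setP => w; rewrite inE; apply/idP/imsetP.
    by case/adj_ex => t [_ hc ->]; exists t; rewrite ?inE.
  by case=> u; rewrite inE => hu ->; apply: adj_nb.
rewrite card_in_imset // => u v; rewrite !inE => hu hv; exact: nb_inj.
Qed.

Lemma deg_le (T : finType) (e : rel T) (S : vcover e) : deg S <= #|T|.
Proof. by rewrite deg_eq max_card. Qed.

Lemma deg_full (T : finType) (e : rel T) (S : vcover e) : deg S = #|T| -> PP S.
Proof.
rewrite deg_eq => h u.
have : [set u : T | is_vertex_cover e (symdiff (val S) [set u])] == setT.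
  rewrite eqEcard subsetT cardsT h.
 by rewrite /= -h leqnn.
by move/eqP/setP/(_ u); rewrite !inE.
Qed.

Lemma cover_setT (T : finType) (e : rel T) : is_vertex_cover e setT.
Proof. by apply/coverP => x y _; rewrite inE. Qed.

Definition top (T : finType) (e : rel T) : vcover e := exist _ setT (cover_setT e).


Lemma PP_top (T : finType) (e : rel T) : simple_graph e -> PP (top e).
Proof.
move=> [hs hi] u; apply/coverP => x y exy; rewrite !in_symdiff !inE /=.
case: (eqVneq x u) => [exu|] //=; subst x.
case: (eqVneq y u) => [eyu|] //; subst y; by rewrite hi in exy.
Qed.

Lemma hin (T : finType) (e : rel T) (S : vcover e) : simple_graph e -> PP S ->
  forall x y, e x y -> (x \in val S) && (y \in val S).
Proof.
move=> [hs hi] hP.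
have hP' : forall a b, e a b -> a \in val S -> b \in val S.
  move=> a b eab aS; move/coverP: (hP a) => /(_ a b eab).
  rewrite !in_symdiff !inE eqxx aS /=.
  case: (eqVneq b a) => [eba|] ; last by rewrite /= => _; case: (b \in val S).
  by subst b; rewrite hi in eab.
move=> x y exy; move/coverP: (valP S) => /(_ x y exy) /orP [xS|yS].
  by rewrite xS (hP' x y).
by rewrite yS (hP' y x) // hs.
Qed.

Lemma keyB (T : finType) (e : rel T) (S : vcover e) : simple_graph e -> PP S ->
  forall u v, u != v ->
  e u v = ~~ [exists w, (w != S) && tar_adj (nb S u) w && tar_adj (nb S v) w].
Proof.
move=> hG hP u v uv; have [hs hi] := hG.
apply/idP/idP.
  move=> euv; apply/negP => /existsP [w /andP [/andP [wS au] av]].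
  case/andP: (hin hG hP euv) => uS vS.
  have nu : forall a, a \in val S -> tar_adj (nb S a) w -> a \notin val w.
    move=> a aS aw; apply/negP => aw'.
    move: aw => /cards1P [t ht]; rewrite val_nb ?hP // in ht.
    have : a \in [set t] by rewrite -ht !in_symdiff !inE eqxx aS aw'.
    rewrite inE => /eqP eat; subst t.
    apply: (negP wS); apply/eqP/val_inj/setP => y.
    move/setP: ht => /(_ y); rewrite !in_symdiff !inE.
    case: (eqVneq y a) => [->|ya] /=; first by rewrite aS aw'.
    by case: (y \in val S); case: (y \in val w).
  move/coverP: (valP w) => /(_ u v euv).
  by rewrite (negbTE (nu u uS au)) (negbTE (nu v vS av)).
apply: contraR => neuv; apply/existsP.
pose W := [set y | (y \in val S) != ((y == u) || (y == v))].
have hW : is_vertex_cover e W.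
  apply/coverP => x y exy; case/andP: (hin hG hP exy) => xS yS.
  rewrite !inE xS yS /= -negb_and; apply/negP => /andP [hx hy].
  case/orP: hx => /eqP ?; case/orP: hy => /eqP ?; subst.
  - by rewrite hi in exy.
  - by rewrite exy in neuv.
  - by rewrite hs exy in neuv.
  - by rewrite hi in exy.
exists (insubd S W); rewrite /tar_adj !val_nb ?hP // insubdK //.
apply/andP; split; first (apply/andP; split).
- apply/negP => /eqP h; have := congr1 val h; rewrite insubdK // => /setP/(_ u).
  by rewrite !inE eqxx /=; case: (u \in val S).
- have -> : symdiff (symdiff (val S) [set u]) W = [set v]; last by rewrite cards1.
  apply/setP => y; rewrite !in_symdiff !inE.
  case: (eqVneq y u) => [->|yu]; first by rewrite eq_sym (negbTE uv) /=; case: (u \in val S).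
  by rewrite /=; case: (y \in val S); case: (y == v).
- have -> : symdiff (symdiff (val S) [set v]) W = [set u]; last by rewrite cards1.
  apply/setP => y; rewrite !in_symdiff !inE.
  case: (eqVneq y v) => [->|yv].
  rewrite orbT [v == u]eq_sym (negbTE uv); by case: (v \in val S).
  by rewrite /= orbF; case: (y \in val S); case: (y == u).
Qed.

Lemma iso_sym (A B : Type) (rA : rel A) (rB : rel B) :
  graph_iso rA rB -> graph_iso rB rA.
Proof.
case=> f [[g fg gf] h]; exists g; split; first by exists f.
by move=> x y; rewrite h !gf.
Qed.

Lemma deg_iso (T T' : finType) (e : rel T) (e' : rel T')
  (phi : vcover e -> vcover e') : bijective phi ->
  (forall x y, tar_adj x y = tar_adj (phi x) (phi y)) ->
  forall S, deg (phi S) = deg S.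
Proof.
move=> phib hphi S; rewrite /deg.
have -> : [set w' | tar_adj (phi S) w'] = phi @: [set w | tar_adj S w].
  apply/setP => w'; rewrite inE; apply/idP/imsetP.
    case: phib => g fg gf h; exists (g w'); last by rewrite gf.
    by rewrite inE hphi gf.
  by case=> w; rewrite inE => hw ->; rewrite -hphi.
exact: card_imset (bij_inj phib).
Qed.

Lemma deg_top (T : finType) (e : rel T) : simple_graph e -> deg (top e) = #|T|.
Proof.
move=> hG; rewrite deg_eq.
have -> : [set u : T | is_vertex_cover e (symdiff (val (top e)) [set u])] = setT.
  by apply/setP => u; rewrite !inE PP_top.
by rewrite cardsT.
Qed.

Lemma card_le (T T' : finType) (e : rel T) (e' : rel T') : simple_graph e ->
  graph_iso (@tar_adj T e) (@tar_adj T' e') -> #|T| <= #|T'|.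
Proof.
move=> hG [phi [phib hphi]].
by have := deg_le (phi (top e)); rewrite deg_iso // deg_top.
Qed.

Theorem proposition6p6 (T T' : finType) (e : rel T) (e' : rel T')
  (hG : simple_graph e) (hG' : simple_graph e')
  (hT : 0 < #|T|) (hT' : 0 < #|T'|) :
  graph_iso (@tar_adj T e) (@tar_adj T' e') -> graph_iso e e'.
Proof.
move=> iso; have hle := card_le hG iso; have hge := card_le hG' (iso_sym iso).
case: iso => phi [phib hphi].
case/card_gt0P: hT' => x0 _.
have hPS : PP (phi (top e)).
  by apply: deg_full; rewrite deg_iso // deg_top //; apply/eqP; rewrite eqn_leq hle hge.
pose f u := elt x0 (phi (top e)) (phi (nb (top e) u)).
have hf : forall u, phi (nb (top e) u) = nb (phi (top e)) (f u).
  by move=> u; apply: adj_elt; rewrite -hphi adj_nb // PP_top.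
have finj : injective f.
  move=> u v h; apply: (nb_inj (PP_top hG u) (PP_top hG v)).
  by apply: (bij_inj phib); rewrite !hf h.
exists f; split; first exact: inj_card_bij finj hge.
move=> u v; case: (eqVneq u v) => [<-|uv].
  by case: hG => _ ->; case: hG' => _ ->.
have fuv : f u != f v by rewrite (inj_eq finj).
rewrite (keyB hG (PP_top hG) uv) (keyB hG' hPS fuv) -!hf; congr negb.
apply/existsP/existsP => [[w hw]|[w' hw']].
  by exists (phi w); rewrite (inj_eq (bij_inj phib)) -!hphi.
case: phib => g fg gf; exists (g w').
by move: hw'; rewrite -[w']gf (inj_eq (can_inj fg)) -!hphi gf.
Qed.
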